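(* Let $P_n$ be the path graph with $n$ nodes labeled consecutively from one end to the other as $1,2,\dots,n$. Then the sequence $C=(\theta_{12},\theta_{13},\dots,\theta_{1n})$ of communicability angles between node $1$ and the other nodes is monotonic.
   Context: For a graph with adjacency matrix $A$, the communicability is $G_{pq}=(e^{A})_{pq}$ and the communicability angle $\theta_{pq}\in[0^\circ,90^\circ]$ between nodes $p,q$ is defined by $\cos\theta_{pq}=G_{pq}/\sqrt{G_{pp}G_{qq}}$. *)

(* Defs.v *)
From mathcomp Require Import all_boot all_order all_algebra.
From mathcomp Require Import all_classical all_reals all_analysis.
Set Implicit Arguments. Unset Strict Implicit. Unset Printing Implicit Defensive.
Import Order.TTheory GRing.Theory Num.Theory.
Local Open Scope ring_scope.

(* Adjacency matrix of the path graph P_n; node k (1-based in the paper) is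
   the ordinal k-1 here; nodes i, j adjacent iff |i - j| = 1. *)
Definition path_adj (R : realType) (n : nat) : 'M[R]_n :=
  \matrix_(i < n, j < n) (if (i.+1 == j :> nat) || (j.+1 == i :> nat) then 1 else 0).

Definition mxexp (R : realType) (n : nat) (A : 'M[R]_n) : 'M[R]_n :=
  \matrix_(p < n, q < n) (limn (fun N : nat => \sum_(0 <= k < N) ((A ^+ k) p q / (k`!)%:R))).

Definition communicability (R : realType) (n : nat) (A : 'M[R]_n) (p q : 'I_n) : R :=
  mxexp A p q.

Definition comm_angle (R : realType) (n : nat) (A : 'M[R]_n) (p q : 'I_n) : R :=
  acos (communicability A p q /
        Num.sqrt (communicability A p p * communicability A q q)).

(* Main.v *)
Require Import Defs.
From mathcomp Require Import all_boot all_order all_algebra.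
From mathcomp Require Import all_classical all_reals all_analysis.
From mathcomp Require Import zify ring lra.
Import Order.TTheory GRing.Theory Num.Theory numFieldNormedType.Exports.
Local Open Scope ring_scope.

Set Implicit Arguments. Unset Strict Implicit.

Definition pp (R : realType) (n : nat) (k : nat) (p q : 'I_n) : R :=
  (path_adj R n ^+ k) p q / (k`!)%:R.

Definition SS (R : realType) (n : nat) (N : nat) (p q : 'I_n) : R :=
  \sum_(0 <= k < N) pp R k p q.

Lemma adj_ge0 (R : realType) n (i j : 'I_n) : 0 <= path_adj R n i j.
Proof. by rewrite /path_adj mxE; case: ifP. Qed.

Lemma adj_le1 (R : realType) n (i j : 'I_n) : path_adj R n i j <= 1.
Proof. by rewrite /path_adj mxE; case: ifP. Qed.

Lemma adj_sym (R : realType) n (i j : 'I_n) : path_adj R n i j = path_adj R n j i.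
Proof. by rewrite /path_adj !mxE orbC. Qed.

Lemma pow_ge0 (R : realType) n k (i j : 'I_n) : 0 <= (path_adj R n ^+ k) i j.
Proof.
elim: k i j => [|k IH] i j.
  by rewrite expr0 mxE; case: eqP.
rewrite exprSr mxE; apply: sumr_ge0 => w _; apply: mulr_ge0 => //; exact: adj_ge0.
Qed.

Lemma pow_le (R : realType) n k (i j : 'I_n) : (path_adj R n ^+ k) i j <= n%:R ^+ k.
Proof.
elim: k i j => [|k IH] i j.
  by rewrite expr0 mxE; case: eqP.
rewrite exprSr mxE exprSr.
apply: (@le_trans _ _ (\sum_(w < n) n%:R ^+ k)).
  apply: ler_sum => w _; rewrite -[X in _ <= X]mulr1.
  apply: ler_pM => //; [exact: pow_ge0|exact: adj_ge0|exact: adj_le1].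
by rewrite sumr_const card_ord mulr_natr.
Qed.

Lemma pow_sym (R : realType) n k (i j : 'I_n) :
  (path_adj R n ^+ k) i j = (path_adj R n ^+ k) j i.
Proof.
elim: k i j => [|k IH] i j.
  by rewrite expr0 !mxE eq_sym.
rewrite [in LHS]exprSr [in RHS]exprS !mxE; apply: eq_bigr => w _.
by rewrite IH adj_sym mulrC.
Qed.

Lemma pp_ge0 (R : realType) n k (i j : 'I_n) : 0 <= pp R k i j.
Proof. by rewrite /pp divr_ge0 // pow_ge0. Qed.

Lemma pp_sym (R : realType) n k (i j : 'I_n) : pp R k i j = pp R k j i.
Proof. by rewrite /pp pow_sym. Qed.

Lemma SS_sym (R : realType) n N (i j : 'I_n) : SS R N i j = SS R N j i.
Proof. by apply: eq_bigr => k _; rewrite pp_sym. Qed.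

Lemma sum_ext (R : realType) (f : nat -> R) N M : (N <= M)%N ->
  (forall i, 0 <= f i) -> \sum_(0 <= i < N) f i <= \sum_(0 <= i < M) f i.
Proof.
move=> NM f0; rewrite (big_cat_nat (leq0n N) NM) /= lerDl.
by apply: sumr_ge0 => i _.
Qed.

Lemma SS_nd (R : realType) n (i j : 'I_n) : nondecreasing_seq (fun N => SS R N i j).
Proof. by move=> N M NM; apply: sum_ext => // k; exact: pp_ge0. Qed.

Lemma SS_cvg (R : realType) n (i j : 'I_n) : cvgn (fun N => SS R N i j).
Proof.
apply: nondecreasing_is_cvgn; first exact: SS_nd.
exists (limn (series (exp_coeff (n%:R : R)))) => _ [N _ <-].
apply: (@le_trans _ _ (series (exp_coeff (n%:R : R)) N)).
  rewrite /series /= /SS; apply: ler_sum => k _.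
  rewrite /pp /exp_coeff /=; apply: ler_pM => //; first exact: pow_ge0.
  exact: pow_le.
apply: nondecreasing_cvgn_le; last exact: is_cvg_series_exp_coeff.
move=> N1 M1 NM; rewrite /series /=; apply: sum_ext => // k.
by rewrite /exp_coeff /= divr_ge0.
Qed.

Lemma comm_lim (R : realType) n (i j : 'I_n) :
  communicability (path_adj R n) i j = limn (fun N => SS R N i j).
Proof. by rewrite /communicability /mxexp mxE. Qed.
Lemma pp_rec (R : realType) n k (p q : 'I_n) :
  (k.+1)%:R * pp R k.+1 p q = \sum_(w < n) pp R k p w * path_adj R n w q.
Proof.
rewrite /pp exprSr mxE factS natrM invfM.
rewrite mulrCA mulrA [_ * (_ / _)]mulrA mulfK ?pnatr_eq0 //.
rewrite mulr_suml; apply: eq_bigr => w _; by rewrite mulrAC.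
Qed.

Definition EE (R : realType) n (x y : 'I_n) m (u v : 'I_n) : R :=
  \sum_(0 <= a < m.+1) pp R a x u * pp R (m - a) y v.

Lemma EE_rec (R : realType) n (x y : 'I_n) m (u v : 'I_n) :
  (m.+1)%:R * EE R x y m.+1 u v =
  \sum_(w < n) path_adj R n w u * EE R x y m w v +
  \sum_(w < n) path_adj R n w v * EE R x y m u w.
Proof.
rewrite /EE mulr_sumr.
have -> : \sum_(0 <= i < m.+2) (m.+1)%:R * (pp R i x u * pp R (m.+1 - i) y v) =
  \sum_(0 <= i < m.+2) ((i%:R * pp R i x u) * pp R (m.+1 - i) y v) +
  \sum_(0 <= i < m.+2) (pp R i x u * ((m.+1 - i)%:R * pp R (m.+1 - i) y v)).
  rewrite -big_split /=; apply: eq_big_nat => i /andP[_ hi].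
  have e : (m.+1 = i + (m.+1 - i))%N by rewrite subnKC.
  set t := (m.+1 - i)%N; rewrite {1}e natrD; ring.
congr (_ + _).
  rewrite big_nat_recl // mul0r mul0r add0r.
  under eq_bigr do rewrite subSS pp_rec mulr_suml.
  rewrite exchange_big /=; apply: eq_bigr => w _; rewrite mulr_sumr.
  by apply: eq_bigr => a _; ring.
rewrite big_nat_recr //= subnn mul0r mulr0 addr0.
have -> : \sum_(0 <= i < m.+1) pp R i x u * ((m.+1 - i)%:R * pp R (m.+1 - i) y v)
   = \sum_(0 <= i < m.+1) \sum_(w < n) pp R i x u * (pp R (m - i) y w * path_adj R n w v).
  apply: eq_big_nat => i /andP[_ hi]; rewrite subSn // pp_rec mulr_sumr //.
rewrite exchange_big /=; apply: eq_bigr => w _; rewrite mulr_sumr.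
by apply: eq_bigr => a _; ring.
Qed.

Lemma pp0 (R : realType) n (p q : 'I_n) : pp R 0 p q = (p == q)%:R.
Proof. by rewrite /pp expr0 mxE fact0 divr1. Qed.

Lemma EE_D (R : realType) n (x y : 'I_n) (hxy : (x <= y)%N) m (u v : 'I_n) :
  (u <= v)%N -> EE R x y m v u <= EE R x y m u v.
Proof.
elim: m u v => [|m IH] u v huv.
  rewrite /EE !big_nat1 ?subnn ?sub0n !pp0.
  case: (eqVneq x v) => exv; case: (eqVneq y u) => eyu; rewrite ?mul0r ?mulr0 ?mul1r;
    try by apply: mulr_ge0; case: eqP.
  rewrite -exv -eyu in huv *.
  have xy : x = y by apply: val_inj; apply/eqP; rewrite eqn_leq hxy huv.
  by rewrite xy !eqxx mulr1.
case: (eqVneq u v) => [->|nuv]; first by [].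
have luv : (u < v)%N by rewrite ltn_neqAle huv andbT; exact: nuv.
rewrite -subr_ge0.
have hm : (0 : R) < m.+1%:R by rewrite ltr0n.
rewrite -(pmulr_rge0 _ hm) mulrBr !EE_rec.
have -> : \sum_(w < n) path_adj R n w u * EE R x y m w v +
  \sum_(w < n) path_adj R n w v * EE R x y m u w -
  (\sum_(w < n) path_adj R n w v * EE R x y m w u +
   \sum_(w < n) path_adj R n w u * EE R x y m v w) =
  \sum_(w < n) path_adj R n w u * (EE R x y m w v - EE R x y m v w) +
  \sum_(w < n) path_adj R n w v * (EE R x y m u w - EE R x y m w u).
  under [in RHS]eq_bigr do rewrite mulrBr.
  under [X in _ = _ + X]eq_bigr do rewrite mulrBr.
  rewrite !sumrB; ring.
apply: addr_ge0; apply: sumr_ge0 => w _; rewrite /path_adj mxE;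
  case: ifP => h; rewrite ?mul0r // mul1r subr_ge0; apply: IH;
  move: h => /orP[] /eqP; lia.
Qed.

Lemma tri (R : realType) (g : nat -> nat -> R) M :
  \sum_(0 <= m < M) \sum_(0 <= a < m.+1) g a (m - a)%N =
  \sum_(0 <= a < M) \sum_(0 <= b < M - a) g a b.
Proof.
elim: M => [|M IH]; first by rewrite !big_geq.
rewrite big_nat_recr //= IH.
have -> : \sum_(0 <= a < M.+1) \sum_(0 <= b < M.+1 - a) g a b =
   \sum_(0 <= a < M.+1) (\sum_(0 <= b < M - a) g a b + g a (M - a)%N).
  by apply: eq_big_nat => a /andP[_ ha]; rewrite subSn // big_nat_recr.
rewrite big_split /=; congr (_ + _); by rewrite big_nat_recr //= subnn [X in _ + X]big_geq // addr0.
Qed.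

Lemma sq_le_tri (R : realType) (g : nat -> nat -> R) N :
  (forall a b, 0 <= g a b) ->
  \sum_(0 <= a < N) \sum_(0 <= b < N) g a b <=
  \sum_(0 <= m < N + N) \sum_(0 <= a < m.+1) g a (m - a)%N.
Proof.
move=> g0; rewrite tri (big_cat_nat (leq0n N) (leq_addr N N)) /=.
rewrite -[X in X <= _]addr0; apply: lerD; last first.
  by apply: sumr_ge0 => a _; apply: sumr_ge0.
apply: ler_sum_nat => a /andP[_ ha]; apply: sum_ext => //; lia.
Qed.

Lemma tri_le_sq (R : realType) (g : nat -> nat -> R) M :
  (forall a b, 0 <= g a b) ->
  \sum_(0 <= m < M) \sum_(0 <= a < m.+1) g a (m - a)%N <=
  \sum_(0 <= a < M) \sum_(0 <= b < M) g a b.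
Proof.
move=> g0; rewrite tri; apply: ler_sum_nat => a _; apply: sum_ext => //; lia.
Qed.

Lemma SS_mul (R : realType) n N (x y u v : 'I_n) :
  SS R N x u * SS R N y v = \sum_(0 <= a < N) \sum_(0 <= b < N) (pp R a x u * pp R b y v).
Proof.
rewrite /SS mulr_suml; apply: eq_bigr => a _; by rewrite mulr_sumr.
Qed.

Lemma SS_ge0 (R : realType) n N (x u : 'I_n) : 0 <= SS R N x u.
Proof. by apply: sumr_ge0 => k _; exact: pp_ge0. Qed.

Lemma minor (R : realType) n (x y u v : 'I_n) : (x <= y)%N -> (u <= v)%N ->
  communicability (path_adj R n) x v * communicability (path_adj R n) y u <=
  communicability (path_adj R n) x u * communicability (path_adj R n) y v.
Proof.
move=> hxy huv; rewrite !comm_lim -limM; try exact: SS_cvg.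
apply: limr_le; first by apply: is_cvgM; exact: SS_cvg.
near=> N => /=.
apply: (@le_trans _ _ (SS R (N + N) x u * SS R (N + N) y v)); last first.
  apply: ler_pM; rewrite ?SS_ge0 //; apply: nondecreasing_cvgn_le;
    (exact: SS_nd || exact: SS_cvg).
rewrite SS_mul SS_mul.
apply: le_trans; first by apply: sq_le_tri => a b; apply: mulr_ge0; exact: pp_ge0.
apply: le_trans; last by apply: tri_le_sq => a b; apply: mulr_ge0; exact: pp_ge0.
apply: ler_sum_nat => m _; exact: (@EE_D R n x y hxy m u v huv).
Unshelve. all: by end_near.
Qed.

Lemma G_ge0 (R : realType) n (p q : 'I_n) : 0 <= communicability (path_adj R n) p q.
Proof.
rewrite comm_lim; apply: limr_ge; first exact: SS_cvg.
by near=> N; exact: SS_ge0.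
Unshelve. all: by end_near.
Qed.

Lemma G_sym (R : realType) n (p q : 'I_n) :
  communicability (path_adj R n) p q = communicability (path_adj R n) q p.
Proof.
rewrite !comm_lim; congr (limn _); apply: funext => N; exact: SS_sym.
Qed.

Lemma G_diag (R : realType) n (p : 'I_n) : 1 <= communicability (path_adj R n) p p.
Proof.
rewrite comm_lim; apply: limr_ge; first exact: SS_cvg.
near=> N; apply: (@le_trans _ _ (SS R 1 p p)).
  by rewrite /SS big_nat1 pp0 eqxx.
by apply: SS_nd; near: N; exists 1%N.
Unshelve. all: by end_near.
Qed.

Lemma G_adj (R : realType) n (p q : 'I_n) : val q = (val p).+1 ->
  1 <= communicability (path_adj R n) p q.
Proof.
move=> hq; rewrite comm_lim; apply: limr_ge; first exact: SS_cvg.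
near=> N; apply: (@le_trans _ _ (SS R 2 p q)).
  rewrite /SS big_nat_recr //= big_nat1 pp0 /pp expr1 /path_adj mxE.
  rewrite hq eqxx /= divr1 -[X in X <= _]add0r lerD //; by case: eqP.
by apply: SS_nd; near: N; exists 2%N.
Unshelve. all: by end_near.
Qed.

Definition cval (R : realType) n (o j : 'I_n) : R :=
  communicability (path_adj R n) o j /
  Num.sqrt (communicability (path_adj R n) o o * communicability (path_adj R n) j j).

Lemma cval_range (R : realType) n (o j : 'I_n) : val o = 0%N ->
  0 <= cval R o j <= 1.
Proof.
move=> ho; set G := communicability (path_adj R n).
have gp : 0 < Num.sqrt (G o o * G j j).
  rewrite sqrtr_gt0; apply: mulr_gt0; apply: (lt_le_trans ltr01); exact: G_diag.
apply/andP; split; first by rewrite divr_ge0 ?G_ge0 // ltW.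
rewrite ler_pdivrMr // mul1r.
have h := @minor R n o j o j (ltac:(by rewrite ho)) (ltac:(by rewrite ho)).
rewrite (@G_sym R n j o) -/G in h.
rewrite -/G -[G o j]ger0_norm ?G_ge0 // -sqrtr_sqr ler_sqrt; last first.
  by apply: mulr_ge0; apply: G_ge0.
by rewrite expr2.
Qed.

Lemma cval_step (R : realType) n (o j k : 'I_n) : val o = 0%N -> val k = (val j).+1 ->
  cval R o k <= cval R o j.
Proof.
move=> ho hk; rewrite /cval.
set G := communicability (path_adj R n).
have oj : (o <= j)%N by rewrite ho.
have ok : (o <= k)%N by rewrite ho.
have jk : (j <= k)%N by rewrite hk.
have h1 := @minor R n o j j k oj jk.
have h2 := @minor R n o k j k ok jk.
rewrite (@G_sym R n k j) -/G in h1 h2.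
have gpos : 0 < G o o by apply: (lt_le_trans ltr01); exact: G_diag.
have ppos : 0 < G j j by apply: (lt_le_trans ltr01); exact: G_diag.
have qpos : 0 < G k k by apply: (lt_le_trans ltr01); exact: G_diag.
have spos : 0 < G j k by apply: (lt_le_trans ltr01); exact: G_adj.
have a0 : 0 <= G o j by apply: G_ge0.
have b0 : 0 <= G o k by apply: G_ge0.
have key : G o k ^+ 2 * G j j <= G o j ^+ 2 * G k k.
  rewrite -(ler_pM2r spos).
  have := ler_pM (mulr_ge0 b0 (ltW ppos)) (mulr_ge0 b0 (ltW spos)) h1 h2.
  by congr (_ <= _); ring.
set X := G o k / _; set Y := G o j / _.
have X0 : 0 <= X by rewrite /X divr_ge0 // sqrtr_ge0.
have Y0 : 0 <= Y by rewrite /Y divr_ge0 // sqrtr_ge0.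
rewrite -(ger0_norm X0) -(ger0_norm Y0) -!sqrtr_sqr ler_sqrt ?sqr_ge0 //.
rewrite /X /Y !expr_div_n !sqr_sqrtr ?(mulr_ge0 (ltW gpos) (ltW qpos)) ?(mulr_ge0 (ltW gpos) (ltW ppos)) //.
have -> : G o k ^+ 2 / (G o o * G k k) = (G o k ^+ 2 * G j j) / (G o o * G j j * G k k).
  by field; rewrite ?mulf_neq0 ?gt_eqF.
have -> : G o j ^+ 2 / (G o o * G j j) = (G o j ^+ 2 * G k k) / (G o o * G j j * G k k).
  by field; rewrite ?mulf_neq0 ?gt_eqF.
by rewrite ler_pM2r // invr_gt0 !mulr_gt0.
Qed.

Lemma acos_anti (R : realType) (x y : R) : -1 <= x <= 1 -> -1 <= y <= 1 ->
  x <= y -> acos y <= acos x.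
Proof.
move=> hx hy xy; rewrite leNgt; apply/negP => h.
have ax : acos x \in `[0, pi] by rewrite in_itv /= acos_ge0 ?acos_lepi.
have ay : acos y \in `[0, pi] by rewrite in_itv /= acos_ge0 ?acos_lepi.
move: h; rewrite -(ltr_cos ax ay) !acosK ?in_itv //=.
by rewrite ltNge xy.
Qed.

Theorem proposition5p2 (R : realType) (n : nat) (h0 : (0 < n)%N) :
  let theta := fun j : 'I_n => comm_angle (path_adj R n) (Ordinal h0) j in
  (forall i j : 'I_n, (1 <= i)%N -> (i <= j)%N -> theta i <= theta j) \/
  (forall i j : 'I_n, (1 <= i)%N -> (i <= j)%N -> theta j <= theta i).
Proof.
move=> theta; left.
set o := Ordinal h0.
have ho : val o = 0%N by [].
have step : forall j k : 'I_n, val k = (val j).+1 -> theta j <= theta k.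
  move=> j k hk; rewrite /theta /comm_angle.
  change (acos (cval R o j) <= acos (cval R o k)).
  have /andP[c1 c2] := @cval_range R n o j ho.
  have /andP[d1 d2] := @cval_range R n o k ho.
  apply: acos_anti.
  - by rewrite d2 andbT (le_trans _ d1) // lerN10.
  - by rewrite c2 andbT (le_trans _ c1) // lerN10.
  exact: (@cval_step R n o j k ho hk).
have gen : forall d (i j : 'I_n), val j = (val i + d)%N -> theta i <= theta j.
  elim=> [|d IH] i j hij.
    by have -> : j = i by apply: val_inj; rewrite hij addn0.
  have hlt : (val i + d < n)%N by have hj : (val j < n)%N := ltn_ord j; rewrite hij in hj; lia.
  apply: (@le_trans _ _ (theta (Ordinal hlt))).
    exact: IH.
  by apply: step; rewrite hij addnS.
move=> i j _ hij; apply: (gen (val j - val i)%N); rewrite subnKC //.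
Qed.
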